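(* For $1<p\le 2$ and $1\le q\le 2$, the pair $(\ell_p^2(\mathbb{R}),\ell_q^2(\mathbb{R}))$ fails the uniform sBPBp.
   Context: $\ell_p^2(\mathbb{R})$ denotes $\mathbb{R}^2$ with the norm $\|(x,y)\|_p=(|x|^p+|y|^p)^{1/p}$; $S_X$ is the unit sphere of $X$ and $\mathcal{L}(X,Y)$ the bounded linear operators. A pair of Banach spaces $(X,Y)$ has the uniform strong Bishop–Phelps–Bollobás property (uniform sBPBp) if for every $\varepsilon>0$ there exists $\eta(\varepsilon)>0$ such that whenever $T\in\mathcal{L}(X,Y)$ with $\|T\|=1$ and $x_0\in S_X$ satisfy $\|T(x_0)\|>1-\eta(\varepsilon)$, there exists $x_1\in S_X$ with $\|T(x_1)\|=1$ and $\|x_1-x_0\|<\varepsilon$. *)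

(* Defs.v *)
From Stdlib Require Import Reals.
Open Scope R_scope.

(* Real power a^r for a >= 0, with the convention 0^r = 0 (r > 0 in all uses).
   Stdlib's Rpower is only meaningful for a > 0. *)
Definition rpow (a r : R) : R :=
  if Rle_dec a 0 then 0 else Rpower a r.

Definition vec := (R * R)%type.

Definition vsub (u v : vec) : vec := (fst u - fst v, snd u - snd v).

Definition lpnorm (p : R) (v : vec) : R :=
  rpow (rpow (Rabs (fst v)) p + rpow (Rabs (snd v)) p) (1 / p).

(* Linear operators on R^2 (every linear map R^2 -> R^2 is bounded),
   represented by their matrix [[a, b], [c, d]]. *)
Record op2 := mkOp { oa : R; ob : R; oc : R; od : R }.

Definition app (T : op2) (v : vec) : vec :=
  (oa T * fst v + ob T * snd v, oc T * fst v + od T * snd v).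

Definition opnorm_is (p q : R) (T : op2) (c : R) : Prop :=
  is_lub (fun r => exists x : vec, lpnorm p x = 1 /\ r = lpnorm q (app T x)) c.

Definition uniform_sBPBp (p q : R) : Prop :=
  forall eps : R, 0 < eps ->
  exists eta : R, 0 < eta /\
    forall (T : op2) (x0 : vec),
      opnorm_is p q T 1 ->
      lpnorm p x0 = 1 ->
      lpnorm q (app T x0) > 1 - eta ->
      exists x1 : vec,
        lpnorm p x1 = 1 /\ lpnorm q (app T x1) = 1 /\
        lpnorm p (vsub x1 x0) < eps.

(* Main.v *)
Require Import Defs.
From Stdlib Require Import Reals Lra.
Open Scope R_scope.

Lemma exp_le_mono a b : a <= b -> exp a <= exp b.
Proof. intros [H|H]; [left; apply exp_increasing; auto | subst; lra]. Qed.

Lemma ln_le_mono a b : 0 < a -> a <= b -> ln a <= ln b.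
Proof. intros Ha [H|H]; [left; apply ln_increasing; auto | subst; lra]. Qed.

Lemma rpow_0 r : rpow 0 r = 0.
Proof. unfold rpow; destruct (Rle_dec 0 0); lra. Qed.

Lemma rpow_pos x r : 0 < x -> rpow x r = Rpower x r.
Proof. intros; unfold rpow; destruct (Rle_dec x 0); [lra|auto]. Qed.

Lemma rpow_ge0 x r : 0 <= rpow x r.
Proof. unfold rpow; destruct (Rle_dec x 0); [lra|]. unfold Rpower; left; apply exp_pos. Qed.

Lemma rpow_gt0 x r : 0 < x -> 0 < rpow x r.
Proof. intros; rewrite rpow_pos; auto. unfold Rpower; apply exp_pos. Qed.

Lemma rpow_1 r : rpow 1 r = 1.
Proof. rewrite rpow_pos by lra. unfold Rpower; rewrite ln_1, Rmult_0_r; apply exp_0. Qed.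

Lemma rpow_x1 x : 0 <= x -> rpow x 1 = x.
Proof. intros [H|H]; [rewrite rpow_pos; auto; apply Rpower_1; auto | subst; apply rpow_0]. Qed.

Lemma rpow_le1 x r : 0 < r -> x <= 1 -> rpow x r <= 1.
Proof.
  intros Hr Hx. destruct (Rle_dec x 0). { unfold rpow; destruct (Rle_dec x 0); lra. }
  rewrite rpow_pos by lra. unfold Rpower. rewrite <- exp_0. apply exp_le_mono.
  assert (ln x <= 0) by (rewrite <- ln_1; apply ln_le_mono; lra). nra.
Qed.

Lemma rpow_lt1 x r : 0 < r -> x < 1 -> rpow x r < 1.
Proof.
  intros Hr Hx. destruct (Rle_dec x 0). { unfold rpow; destruct (Rle_dec x 0); lra. }
  rewrite rpow_pos by lra. unfold Rpower. rewrite <- exp_0. apply exp_increasing.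
  assert (ln x < 0) by (rewrite <- ln_1; apply ln_increasing; lra). nra.
Qed.

Lemma rpow_gt1 x r : 0 < r -> 1 < x -> 1 < rpow x r.
Proof.
  intros Hr Hx. rewrite rpow_pos by lra. unfold Rpower. rewrite <- exp_0. apply exp_increasing.
  assert (0 < ln x) by (rewrite <- ln_1; apply ln_increasing; lra). nra.
Qed.

Lemma rpow_ge1 x r : 0 < r -> 1 <= x -> 1 <= rpow x r.
Proof.
  intros Hr [H|H]. left; apply rpow_gt1; auto. subst; rewrite rpow_1; lra.
Qed.

Lemma rpow_le1_inv x r : 0 < r -> rpow x r <= 1 -> x <= 1.
Proof. intros Hr H. destruct (Rle_dec x 1); auto. pose proof (rpow_gt1 x r Hr). lra. Qed.

Lemma rpow_lt1_inv x r : 0 < r -> rpow x r < 1 -> x < 1.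
Proof. intros Hr H. destruct (Rlt_dec x 1); auto. pose proof (rpow_ge1 x r Hr). lra. Qed.

Lemma rpow_eq1 x r : 0 < r -> rpow x r = 1 -> x = 1.
Proof.
  intros Hr H. assert (x <= 1) by (apply (rpow_le1_inv x r); lra).
  destruct (Rlt_dec x 1); [|lra]. pose proof (rpow_lt1 x r Hr r0); lra.
Qed.

Lemma rpow_mul c x r : 0 < c -> 0 <= x -> rpow (c * x) r = Rpower c r * rpow x r.
Proof.
  intros Hc [Hx|Hx].
  - rewrite !rpow_pos by nra. rewrite Rpower_mult_distr; auto.
  - subst. rewrite Rmult_0_r, !rpow_0; ring.
Qed.

Lemma rpow_rpow x a b : 0 <= x -> rpow (rpow x a) b = rpow x (a * b).
Proof.
  intros [Hx|Hx].
  - rewrite (rpow_pos x a) by auto. rewrite rpow_pos.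
    + rewrite Rpower_mult, rpow_pos; auto.
    + unfold Rpower; apply exp_pos.
  - subst; rewrite !rpow_0; reflexivity.
Qed.

Lemma rpow_abs_sq t r : rpow (Rabs t) r = rpow (t * t) (r / 2).
Proof.
  destruct (Req_dec t 0).
  - subst. rewrite Rabs_R0, Rmult_0_r, !rpow_0; auto.
  - assert (0 < Rabs t) by (apply Rabs_pos_lt; auto).
    assert (E : t * t = Rabs t * Rabs t) by (rewrite <- Rabs_mult, Rabs_right; nra).
    rewrite E. rewrite !rpow_pos by nra. unfold Rpower. rewrite ln_mult by auto.
    f_equal; field.
Qed.

Lemma exp_convex r y : 0 <= r <= 1 -> exp (r * y) <= 1 - r + r * exp y.
Proof.
  intros Hr. set (m := r * y).
  assert (E1 : exp y = exp m * exp (y - m)) by (rewrite <- exp_plus; f_equal; ring).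
  assert (E0 : 1 = exp m * exp (- m)) by (rewrite <- exp_plus, <- exp_0; f_equal; ring).
  pose proof (exp_ineq1_le (y - m)). pose proof (exp_ineq1_le (- m)).
  pose proof (exp_pos m).
  assert (exp m * (1 + (y - m)) <= exp y) by (rewrite E1; apply Rmult_le_compat_l; lra).
  assert (exp m * (1 + - m) <= 1) by (rewrite E0 at 2; apply Rmult_le_compat_l; lra).
  assert (exp m = r * (exp m * (1 + (y - m))) + (1 - r) * (exp m * (1 + - m))).
  { unfold m. ring. }
  nra.
Qed.

Lemma bern t r : 0 < t -> 0 <= r <= 1 -> Rpower t r <= 1 - r + r * t.
Proof.
  intros Ht Hr. unfold Rpower. pose proof (exp_convex r (ln t) Hr). rewrite exp_ln in H; auto.
Qed.

Lemma rpow_bern x m r : 0 <= x -> 0 < m -> 0 <= r <= 1 ->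
  rpow x r <= Rpower m r * (1 - r + r * (x / m)).
Proof.
  intros Hx Hm Hr. assert (Hmr : 0 < Rpower m r) by (unfold Rpower; apply exp_pos).
  destruct Hx as [Hx|Hx].
  - replace x with (m * (x / m)) at 1 by (field; lra).
    rewrite rpow_mul by (try apply Rlt_le; try (unfold Rdiv; apply Rmult_lt_0_compat); auto; apply Rinv_0_lt_compat; auto).
    apply Rmult_le_compat_l; [lra|]. rewrite rpow_pos.
    + apply bern; auto. unfold Rdiv; apply Rmult_lt_0_compat; auto; apply Rinv_0_lt_compat; auto.
    + unfold Rdiv; apply Rmult_lt_0_compat; auto; apply Rinv_0_lt_compat; auto.
  - subst. rewrite rpow_0. unfold Rdiv. rewrite Rmult_0_l, Rmult_0_r, Rplus_0_r.
    apply Rmult_le_pos; lra.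
Qed.

Lemma conc A B r : 0 <= A -> 0 <= B -> 0 <= r <= 1 ->
  rpow A r + rpow B r <= 2 * rpow ((A + B) / 2) r.
Proof.
  intros HA HB Hr. destruct (Req_dec (A + B) 0).
  - assert (A = 0) by lra. assert (B = 0) by lra. subst. replace ((0+0)/2) with 0 by field. rewrite !rpow_0. lra.
  - set (m := (A + B) / 2). assert (Hm : 0 < m) by (unfold m; lra).
    pose proof (rpow_bern A m r HA Hm Hr). pose proof (rpow_bern B m r HB Hm Hr).
    rewrite (rpow_pos m) by auto.
    assert (E : Rpower m r * (1 - r + r * (A / m)) + Rpower m r * (1 - r + r * (B / m))
       = Rpower m r * (2 - 2 * r + r * ((A + B) / m))) by (field; lra).
    replace ((A + B) / m) with 2 in E by (unfold m; field; lra). lra.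
Qed.

Lemma rpow_ge_lin t r : 0 <= t <= 1 -> 0 < r <= 1 -> t <= rpow t r.
Proof.
  intros Ht Hr. destruct (Req_dec t 0). { subst; rewrite rpow_0; lra. }
  rewrite rpow_pos by lra. unfold Rpower. rewrite <- (exp_ln t) at 1 by lra.
  apply exp_le_mono. assert (ln t <= 0) by (rewrite <- ln_1; apply ln_le_mono; lra). nra.
Qed.

Lemma subadd A B r : 0 <= A -> 0 <= B -> 0 < r <= 1 ->
  rpow (A + B) r <= rpow A r + rpow B r.
Proof.
  intros HA HB Hr. destruct (Req_dec (A + B) 0).
  - rewrite H, rpow_0. pose proof (rpow_ge0 A r); pose proof (rpow_ge0 B r); lra.
  - set (s := A + B). assert (Hs : 0 < s) by (unfold s; lra).
    assert (EA : A = s * (A / s)) by (field; lra). assert (EB : B = s * (B / s)) by (field; lra).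
    assert (0 <= A / s <= 1). { split. unfold Rdiv; apply Rmult_le_pos; auto; left; apply Rinv_0_lt_compat; auto.
       apply (Rmult_le_reg_l s); auto. rewrite <- EA. unfold s; lra. }
    assert (0 <= B / s <= 1). { split. unfold Rdiv; apply Rmult_le_pos; auto; left; apply Rinv_0_lt_compat; auto.
       apply (Rmult_le_reg_l s); auto. rewrite <- EB. unfold s; lra. }
    rewrite EA at 1. rewrite EB at 1. rewrite !rpow_mul by (auto; lra).
    rewrite (rpow_pos s) by auto.
    pose proof (rpow_ge_lin (A / s) r H0 Hr). pose proof (rpow_ge_lin (B / s) r H1 Hr).
    assert (Hp : 0 < Rpower s r) by (unfold Rpower; apply exp_pos).
    assert (A / s + B / s = 1) by (unfold s; field; lra).
    assert (Rpower s r * (A / s + B / s) <= Rpower s r * rpow (A / s) r + Rpower s r * rpow (B / s) r).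
    { rewrite <- Rmult_plus_distr_l. apply Rmult_le_compat_l; lra. }
    nra.
Qed.

Definition kk (q : R) := Rpower (/2) (/q).
Definition TT (q d : R) := mkOp (kk q) (kk q * (1 - d)) (kk q) (- (kk q * (1 - d))).

Lemma kk_pos q : 0 < kk q.
Proof. unfold kk, Rpower; apply exp_pos. Qed.

Lemma kk_pow q : 0 < q -> Rpower (kk q) q = / 2.
Proof. intros. unfold kk. rewrite Rpower_mult. replace (/ q * q) with 1 by (field; lra).
  apply Rpower_1; lra. Qed.

Lemma rpow_k q t : 0 < q -> rpow (Rabs (kk q * t)) q = / 2 * rpow (t * t) (q / 2).
Proof.
  intros Hq. rewrite Rabs_mult, (Rabs_right (kk q)) by (left; apply kk_pos).
  rewrite rpow_mul by (try apply kk_pos; apply Rabs_pos). rewrite kk_pow by auto.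
  rewrite rpow_abs_sq; auto.
Qed.

Lemma key p q d x : 1 < p <= 2 -> 1 <= q <= 2 -> 0 < d < 1 -> lpnorm p x = 1 ->
  lpnorm q (app (TT q d) x) <= 1 /\ (snd x <> 0 -> lpnorm q (app (TT q d) x) < 1).
Proof.
  intros Hp Hq Hd Hx. destruct x as [x1 x2]. unfold lpnorm in *; simpl in *.
  apply rpow_eq1 in Hx; [| apply Rdiv_lt_0_compat; lra].
  set (a := x1). set (b := (1 - d) * x2).
  assert (Hc : 0 < Rpower (1 - d) p) by (unfold Rpower; apply exp_pos).
  assert (Hc1 : Rpower (1 - d) p < 1).
  { pose proof (rpow_lt1 (1 - d) p ltac:(lra) ltac:(lra)). rewrite rpow_pos in H by lra. auto. }
  assert (Eb : rpow (Rabs b) p = Rpower (1 - d) p * rpow (Rabs x2) p).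
  { unfold b. rewrite Rabs_mult, (Rabs_right (1 - d)) by lra. apply rpow_mul; [lra | apply Rabs_pos]. }
  set (S := rpow (Rabs a) p + rpow (Rabs b) p).
  pose proof (rpow_ge0 (Rabs x2) p) as H2. pose proof (rpow_ge0 (Rabs a) p) as H1.
  assert (HS : S <= 1) by (unfold S; rewrite Eb; unfold a; nra).
  assert (HSs : x2 <> 0 -> S < 1).
  { intros Hx2. assert (0 < rpow (Rabs x2) p) by (apply rpow_gt0, Rabs_pos_lt; auto).
    unfold S; rewrite Eb; unfold a; nra. }
  set (W := a * a + b * b).
  assert (HW : rpow W (p / 2) <= S).
  { unfold W, S. rewrite !rpow_abs_sq. apply subadd; try nra; split; lra. }
  assert (HW1 : W <= 1) by (apply (rpow_le1_inv W (p / 2)); lra).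
  assert (HW2 : x2 <> 0 -> W < 1).
  { intros Hx2. apply (rpow_lt1_inv W (p / 2)); [lra|]. specialize (HSs Hx2); lra. }
  assert (E1 : kk q * a + kk q * (1 - d) * x2 = kk q * (a + b)) by (unfold a, b; ring).
  assert (E2 : kk q * a + - (kk q * (1 - d)) * x2 = kk q * (a - b)) by (unfold a, b; ring).
  unfold app, TT; simpl. rewrite E1, E2, !rpow_k by lra.
  assert (Hin : / 2 * rpow ((a + b) * (a + b)) (q / 2) + / 2 * rpow ((a - b) * (a - b)) (q / 2)
                 <= rpow W (q / 2)).
  { pose proof (conc ((a + b) * (a + b)) ((a - b) * (a - b)) (q / 2)
       (Rle_0_sqr (a + b)) (Rle_0_sqr (a - b)) ltac:(split; lra)).
    replace (((a + b) * (a + b) + (a - b) * (a - b)) / 2) with W in H by (unfold W; field). lra. }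
  split.
  - apply rpow_le1; [apply Rdiv_lt_0_compat; lra|].
    pose proof (rpow_le1 W (q / 2) ltac:(lra) HW1). lra.
  - intros Hx2. apply rpow_lt1; [apply Rdiv_lt_0_compat; lra|].
    pose proof (rpow_lt1 W (q / 2) ltac:(lra) (HW2 Hx2)). lra.
Qed.

Theorem mainTheorem11 (p q : R) (hp1 : 1 < p) (hp2 : p <= 2)
    (hq1 : 1 <= q) (hq2 : q <= 2) :
  ~ uniform_sBPBp p q.
Proof.
  intros U. destruct (U 1 Rlt_0_1) as [eta [Heta H]].
  set (d := Rmin eta 1 / 2).
  assert (Hd : 0 < d < 1 /\ d < eta).
  { unfold d. pose proof (Rmin_l eta 1). pose proof (Rmin_r eta 1).
    assert (0 < Rmin eta 1) by (apply Rmin_pos; lra). lra. }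
  assert (Hq0 : 0 < q) by lra.
  assert (Hp0 : 0 < 1 / p) by (apply Rdiv_lt_0_compat; lra).
  assert (Hq0' : 0 < 1 / q) by (apply Rdiv_lt_0_compat; lra).
  assert (Hnp : lpnorm p (1, 0) = 1).
  { unfold lpnorm; simpl. rewrite Rabs_R1, Rabs_R0, rpow_1, rpow_0, Rplus_0_r. apply rpow_1. }
  assert (Hnp0 : lpnorm p (0, 1) = 1).
  { unfold lpnorm; simpl. rewrite Rabs_R1, Rabs_R0, rpow_1, rpow_0, Rplus_0_l. apply rpow_1. }
  assert (Hop : opnorm_is p q (TT q d) 1).
  { split.
    - intros r [x [Hx ->]]. apply (key p q d x); auto; lra.
    - intros b Hb. apply Hb. exists (1, 0). split; auto.
      unfold lpnorm, app, TT; simpl.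
      replace (kk q * 1 + kk q * (1 - d) * 0) with (kk q * 1) by ring.
      replace (kk q * 1 + - (kk q * (1 - d)) * 0) with (kk q * 1) by ring.
      rewrite rpow_k by lra. rewrite (Rmult_1_r 1), rpow_1.
      replace (/ 2 * 1 + / 2 * 1) with 1 by field. symmetry; apply rpow_1. }
  destruct (H (TT q d) (0, 1) Hop Hnp0) as [x1 [Hx1 [HT Hdist]]].
  - unfold lpnorm, app, TT; simpl.
    replace (kk q * 0 + kk q * (1 - d) * 1) with (kk q * (1 - d)) by ring.
    replace (kk q * 0 + - (kk q * (1 - d)) * 1) with (kk q * (- (1 - d))) by ring.
    rewrite !rpow_k by lra.
    replace (- (1 - d) * - (1 - d)) with ((1 - d) * (1 - d)) by ring.
    replace (/ 2 * rpow ((1 - d) * (1 - d)) (q / 2) + / 2 * rpow ((1 - d) * (1 - d)) (q / 2))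
      with (rpow ((1 - d) * (1 - d)) (q / 2)) by field.
    rewrite rpow_rpow by (apply Rle_0_sqr).
    replace (q / 2 * (1 / q)) with (1 / 2) by (field; lra).
    rewrite <- rpow_abs_sq, rpow_x1 by apply Rabs_pos.
    rewrite Rabs_right by lra. lra.
  - destruct x1 as [y1 y2].
    destruct (Req_dec y2 0) as [Hy2|Hy2].
    + subst y2. unfold lpnorm in Hx1, Hdist; simpl in *.
      apply rpow_eq1 in Hx1; auto. rewrite Rabs_R0, rpow_0, Rplus_0_r in Hx1.
      apply rpow_eq1 in Hx1; [|lra].
      rewrite Rminus_0_r, Hx1 in Hdist. replace (Rabs (0 - 1)) with 1 in Hdist by (unfold Rabs; destruct (Rcase_abs (0 - 1)); lra).
      rewrite rpow_1 in Hdist.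
      pose proof (rpow_ge1 (1 + 1) (1 / p) Hp0 ltac:(lra)). lra.
    + destruct (key p q d (y1, y2)) as [_ K]; auto; try lra.
      specialize (K Hy2). lra.
Qed.
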